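(* Let $R$ be a commutative noetherian ring. The subcategory of finitely weakly Laskerian $R$-modules satisfies the condition $C_{\mathfrak a}$ for every ideal $\mathfrak a$ of $R$.
   Context: An $R$-module $M$ is finitely weakly Laskerian if $\mathrm{Ass}_R(M/K)$ is finite for every finitely generated submodule $K$ of $M$. A subcategory $\mathcal S$ of $R$-modules satisfies the condition $C_{\mathfrak a}$ if for every $R$-module $M$: whenever $\Gamma_{\mathfrak a}(M)=M$ and $(0:_M\mathfrak a)\in\mathcal S$, then $M\in\mathcal S$. *)

(* Defs.v *)
From HB Require Import structures.
From mathcomp Require Import all_boot all_order all_algebra.
From mathcomp Require Import boolp classical_sets cardinality.
Set Implicit Arguments. Unset Strict Implicit. Unset Printing Implicit Defensive.
Import GRing.Theory.
Local Open Scope classical_set_scope.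
Local Open Scope ring_scope.

Section Defs.
Variable R : comPzRingType.

Definition is_ideal (I : set R) : Prop :=
  I 0 /\ (forall x y, I x -> I y -> I (x + y)) /\ (forall r x, I x -> I (r * x)).

Definition prime_ideal (p : set R) : Prop :=
  is_ideal p /\ ~ p 1 /\ (forall x y, p (x * y) -> p x \/ p y).

Definition ideal_gen (A : set R) : set R :=
  [set r | forall I, is_ideal I -> A `<=` I -> I r].

Definition noetherian_ring : Prop :=
  forall I : set R, is_ideal I -> exists s : seq R, I = ideal_gen [set x | x \in s].

(* a^n : the ideal generated by all products of n elements of a (a^0 = R) *)
Definition ideal_pow (a : set R) (n : nat) : set R :=
  ideal_gen [set r | exists rs : seq R,
     size rs = n /\ (forall x, x \in rs -> a x) /\ r = \prod_(x <- rs) x].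

Variable M : lmodType R.

Definition is_submod (N : set M) : Prop :=
  N 0 /\ (forall x y, N x -> N y -> N (x + y)) /\ (forall (r : R) x, N x -> N (r *: x)).

Definition submod_gen (A : set M) : set M :=
  [set v | forall N, is_submod N -> A `<=` N -> N v].

Definition fg_submod (K : set M) : Prop :=
  exists s : seq M, K = submod_gen [set x | x \in s].

(* Ass_R(N/K) for submodules K <= N of M: primes p with p = (K :_R x),
   x in N \ K  (i.e. p = Ann_R of the nonzero class of x in N/K). *)
Definition Ass_quot (N K : set M) : set (set R) :=
  [set p | prime_ideal p /\
     exists x, N x /\ ~ K x /\ p = [set r | K (r *: x)]].

Definition Gamma (a : set R) : set M :=
  [set x | exists n, ideal_pow a n `<=` [set r | r *: x = 0]].

Definition colon0 (a : set R) : set M :=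
  [set x | forall r, a r -> r *: x = 0].

Definition fwl (N : set M) : Prop :=
  forall K : set M, is_submod K -> fg_submod K -> K `<=` N -> finite_set (Ass_quot N K).

End Defs.

(* A "subcategory" of R-modules, given as a predicate on modules presented as
   submodules N of some ambient module M (M itself is the case N = setT). *)
Definition module_class (R : comPzRingType) :=
  forall M : lmodType R, set M -> Prop.

Definition condition_C (R : comPzRingType) (S : module_class R) (a : set R) : Prop :=
  forall M : lmodType R,
    @Gamma R M a = [set: M] -> S M (@colon0 R M a) -> S M [set: M].

Definition fwl_class (R : comPzRingType) : module_class R := fun M N => @fwl R M N.

(* Main.v *)
Require Import Defs.
From mathcomp Require Import all_boot all_order all_algebra.
From mathcomp Require Import boolp classical_sets cardinality.
Set Implicit Arguments. Unset Strict Implicit. Unset Printing Implicit Defensive.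
Import GRing.Theory.
Local Open Scope classical_set_scope.
Local Open Scope ring_scope.

Section Aux.
Variable R : comPzRingType.
Variable M : lmodType R.

Lemma sm0 (N : set M) : is_submod N -> N 0.
Proof. by case. Qed.
Lemma smD (N : set M) x y : is_submod N -> N x -> N y -> N (x + y).
Proof. by case=> _ [H _]; apply: H. Qed.
Lemma smZ (N : set M) r x : is_submod N -> N x -> N (r *: x).
Proof. by case=> _ [_ H]; apply: H. Qed.
Lemma smN (N : set M) x : is_submod N -> N x -> N (- x).
Proof. by move=> HN Hx; rewrite -scaleN1r; apply: smZ. Qed.
Lemma smB (N : set M) x y : is_submod N -> N x -> N y -> N (x - y).
Proof. by move=> HN Hx Hy; apply: smD => //; apply: smN. Qed.

Lemma gen_submod (A : set M) : is_submod (submod_gen A).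
Proof.
split; first by move=> N [].
split.
- move=> x y Hx Hy N HN HA; apply: smD => //; [exact: Hx | exact: Hy].
- move=> r x Hx N HN HA; apply: smZ => //; exact: Hx.
Qed.

Lemma gen_incl (A : set M) : A `<=` submod_gen A.
Proof. by move=> x Ax N _ HA; apply: HA. Qed.

Lemma gen_min (A : set M) N : is_submod N -> A `<=` N -> submod_gen A `<=` N.
Proof. by move=> HN HA x Hx; apply: Hx. Qed.

Lemma gen_mono (A B : set M) : A `<=` B -> submod_gen A `<=` submod_gen B.
Proof.
move=> AB; apply: gen_min; first exact: gen_submod.
exact: subset_trans AB (@gen_incl B).
Qed.

Lemma gen_eq N (A : set M) : is_submod N -> A `<=` N -> N `<=` submod_gen A ->
  N = submod_gen A.
Proof. by move=> HN HA HB; apply/seteqP; split => //; apply: gen_min. Qed.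

Lemma igen_incl (A : set R) : A `<=` ideal_gen A.
Proof. by move=> x Ax I _ HA; apply: HA. Qed.

Lemma igen_min (A : set R) I : is_ideal I -> A `<=` I -> ideal_gen A `<=` I.
Proof. by move=> HI HA x Hx; apply: Hx. Qed.

Lemma fg_of_sub (noeth : noetherian_ring R) (s : seq M) :
  forall N, is_submod N -> N `<=` submod_gen [set x | x \in s] -> fg_submod N.
Proof.
elim: s => [|x s IH] N HN HNs.
  by exists [::]; apply: gen_eq => // y /=; rewrite in_nil.
pose G := submod_gen [set z | z \in s].
have HG : is_submod G := gen_submod _.
pose I := [set r : R | exists y, N y /\ G (y - r *: x)].
have HI : is_ideal I.
  split; first by exists 0; split; [exact: (sm0 HN) | rewrite scale0r subr0; exact: (sm0 HG)].
  split.
  - move=> r r' [y [Ny Gy]] [y' [Ny' Gy']]; exists (y + y'); split; first exact: (smD HN).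
    by rewrite scalerDl opprD addrACA; exact: (smD HG).
  - move=> t r [y [Ny Gy]]; exists (t *: y); split; first exact: (smZ _ HN).
    by rewrite -scalerA -scalerBr; apply: (smZ _ HG).
have [rs Hrs] := noeth _ HI.
have [ys [HysN Hys]] : exists ys : seq M, (forall y, y \in ys -> N y) /\
    (forall r, r \in rs -> exists w, submod_gen [set z | z \in ys] w /\ G (w - r *: x)).
  have : forall r, r \in rs -> I r by move=> r hr; rewrite Hrs; exact: (@igen_incl [set x | x \in rs] r hr).
  elim: (rs) => [|r rs' IHr] Hr.
    by exists [::]; split => // r; rewrite in_nil.
  have Hr' : forall r', r' \in rs' -> I r' by move=> r' h; apply: Hr; rewrite in_cons h orbT.
  have [ys [H1 H2]] := IHr Hr'.
  have [y [Ny Gy]] := Hr r (mem_head _ _).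
  exists (y :: ys); split.
    by move=> z; rewrite in_cons => /orP [/eqP -> //| ]; apply: H1.
  move=> r'; rewrite in_cons => /orP [/eqP -> | hr'].
    by exists y; split => //; apply: gen_incl; rewrite /= mem_head.
  have [w [Hw Gw]] := H2 _ hr'; exists w; split => //.
  by apply: (gen_mono _ Hw) => z /= hz; rewrite in_cons hz orbT.
have HN' : is_submod (N `&` G).
  split; first by split; [apply: (sm0 HN)| apply: (sm0 HG)].
  split.
  - by move=> u v [Nu Gu] [Nv Gv]; split; [apply: (smD HN) | apply: (smD HG)].
  - by move=> r u [Nu Gu]; split; [apply: (smZ _ HN) | apply: (smZ _ HG)].
have [t Ht] := IH _ HN' (fun u => @proj2 _ _).
exists (ys ++ t); apply: gen_eq => //.
  move=> z /=; rewrite mem_cat => /orP [/HysN // | hz].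
  have : (N `&` G) z by rewrite Ht; apply: gen_incl.
  by case.
move=> y Ny.
have [r Hr] : exists r, G (y - r *: x).
  have HQ : is_submod [set v | exists r, G (v - r *: x)].
    split; first by exists 0; rewrite scale0r subr0; apply: (sm0 HG).
    split.
    - move=> u v [r Hu] [r' Hv]; exists (r + r').
      by rewrite scalerDl opprD addrACA; apply: (smD HG).
    - move=> t' u [r Hu]; exists (t' * r).
      by rewrite -scalerA -scalerBr; apply: (smZ _ HG).
  apply: (gen_min HQ _ (HNs _ Ny)) => z /=; rewrite in_cons => /orP [/eqP -> | hz].
    by exists 1; rewrite scale1r subrr; apply: (sm0 HG).
  by exists 0; rewrite scale0r subr0; apply: gen_incl.
have Ir : ideal_gen [set x | x \in rs] r by rewrite -Hrs; exists y.
have [w [Hw Gw]] : exists w, submod_gen [set z | z \in ys] w /\ G (w - r *: x).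
  have HP : is_ideal [set r | exists w, submod_gen [set z | z \in ys] w /\ G (w - r *: x)].
    split; first by exists 0; split; [exact: (sm0 (gen_submod _)) | rewrite scale0r subr0; apply: (sm0 HG)].
    split.
    - move=> a b [u [Hu Gu]] [v [Hv Gv]]; exists (u + v); split; first by exact: (smD (gen_submod _)).
      by rewrite scalerDl opprD addrACA; apply: (smD HG).
    - move=> a b [u [Hu Gu]]; exists (a *: u); split; first by exact: (smZ _ (gen_submod _)).
      by rewrite -scalerA -scalerBr; apply: (smZ _ HG).
  by apply: (igen_min HP _ Ir) => z /= /Hys.
have Nw : N w by apply: (gen_min HN _ Hw) => z /= /HysN.
have : (N `&` G) (y - w).
  split; first exact: (smB HN).
  have -> : y - w = (y - r *: x) - (w - r *: x) by rewrite opprB addrA subrK.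
  exact: (smB HG).
rewrite Ht => Hyw.
have -> : y = w + (y - w) by rewrite addrC subrK.
apply: (smD (gen_submod _)).
  by apply: (gen_mono _ Hw) => z /= hz; rewrite mem_cat hz.
by apply: (gen_mono _ Hyw) => z /= hz; rewrite mem_cat hz orbT.
Qed.


Lemma ass_split (K J L : set M) : is_submod K -> K `<=` J ->
  Ass_quot L K `<=` Ass_quot J K `|` Ass_quot L J.
Proof.
move=> HK KJ q [Pq [y [Ly [nKy Eq]]]]; subst q.
case: (pselect (exists r, J (r *: y) /\ ~ K (r *: y))) => [[r [Jr nKr]] | H].
- left; split => //; exists (r *: y); split => //; split => //.
  apply/seteqP; split => t /= Ht.
  + by rewrite scalerA mulrC -scalerA; apply: smZ.
  + rewrite scalerA in Ht.
    case: Pq => _ [_ Hp].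
    by case: (Hp _ _ Ht).
- right; split => //; exists y; split => //; split.
  + by move=> Jy; apply: H; exists 1; rewrite scale1r.
  + apply/seteqP; split => t /= Ht; first exact: KJ.
    by apply: contrapT => nK; apply: H; exists t.
Qed.

Definition Nm (c : R) (N : set M) (m : nat) := [set x | N x /\ c ^+ m *: x = 0].

Lemma Nm_submod c N m : is_submod N -> is_submod (Nm c N m).
Proof.
move=> HN; split; first by split; [exact: sm0 | rewrite scaler0].
split.
- by move=> x y [Nx Hx] [Ny Hy]; split; [exact: smD | rewrite scalerDr Hx Hy addr0].
- move=> r x [Nx Hx]; split; first exact: smZ.
  by rewrite scalerA mulrC -scalerA Hx scaler0.
Qed.

Lemma pow_kill c (v : M) n m : c ^+ n *: v = 0 -> (n <= m)%N -> c ^+ m *: v = 0.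
Proof. by move=> H le; rewrite -(subnK le) exprD -scalerA H scaler0. Qed.

Lemma prime_pow (q : set R) c n : prime_ideal q -> q (c ^+ n) -> q c.
Proof.
move=> Pq; elim: n => [|n IH]; first by rewrite expr0; case: Pq => _ [h _].
rewrite exprS; case: (Pq) => _ [_ h] /h [] //; exact: IH.
Qed.

Lemma principal (noeth : noetherian_ring R) c N : is_submod N ->
  (forall x, N x -> exists n, c ^+ n *: x = 0) -> fwl (Nm c N 1) -> fwl N.
Proof.
move=> HN tors hyp.
have HN1 := Nm_submod c 1 HN.
have claim : forall m, fwl (Nm c N m).
  elim => [|m IH].
    move=> K HK _ _; apply: (sub_finite_set _ (finite_set0 _)).
    move=> q [_ [x [[_ Hx] [nKx _]]]]; exfalso; apply: nKx.
    by move: Hx; rewrite expr0 scale1r => ->; exact: sm0.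
  move=> K HK [s Ks] KN.
  pose J := [set v | exists k z, K k /\ Nm c N 1 z /\ v = k + z].
  have KJ : K `<=` J by move=> k Kk; exists k, 0; split => //; split; [exact: sm0 | rewrite addr0].
  apply: (sub_finite_set (@ass_split K J (Nm c N m.+1) HK KJ)); rewrite finite_setU; split.
  - apply: (@sub_finite_set _ _ (Ass_quot (Nm c N 1) (K `&` Nm c N 1))).
      move=> q [Pq [y [[k [z [Kk [N1z Ey]]]] [nKy Eq]]]]; subst y q.
      split => //; exists z; split => //; split.
        by move=> [Kz _]; apply: nKy; apply: smD.
      apply/seteqP; split => t /= H.
        split; last exact: smZ.
        have -> : t *: z = t *: (k + z) - t *: k by rewrite scalerDr addrAC subrr add0r.
        by apply: smB => //; apply: smZ.
      by case: H => H _; rewrite scalerDr; apply: smD => //; apply: smZ.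
    have HKN : is_submod (K `&` Nm c N 1).
      split; first by split; apply: sm0.
      split.
      - by move=> u v [Ku Nu] [Kv Nv]; split; apply: smD.
      - by move=> r u [Ku Nu]; split; apply: smZ.
    apply: hyp => //.
    apply: (fg_of_sub noeth (s := s)) => // u [Ku _]; by rewrite -Ks.
  - pose cK := [set v | exists k, K k /\ v = c *: k].
    apply: (@sub_finite_set _ _ (Ass_quot (Nm c N m) cK)).
      move=> q [Pq [x [[Nx Hx] [nJx Eq]]]]; subst q.
      split => //; exists (c *: x); split.
        by split; [exact: smZ | rewrite scalerA -exprSr].
      split.
        move=> [k [Kk Ek]]; apply: nJx; exists k, (x - k); split => //; split.
          split; first by apply: smB => //; case: (KN _ Kk).
          by rewrite expr1 scalerBr Ek subrr.
        by rewrite addrCA subrr addr0.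
      apply/seteqP; split => t /=.
        move=> [k [z [Kk [[Nz Cz] E]]]]; exists k; split => //.
        by rewrite scalerA mulrC -scalerA E scalerDr; rewrite expr1 in Cz; rewrite Cz addr0.
      move=> [k [Kk E]]; exists k, (t *: x - k); split => //; split.
        split; first by apply: smB; [| apply: smZ | case: (KN _ Kk)].
        by rewrite expr1 scalerBr scalerA mulrC -scalerA E subrr.
      by rewrite addrCA subrr addr0.
    have HcK : is_submod cK.
      split; first by exists 0; split; [exact: sm0 | rewrite scaler0].
      split.
      - by move=> u v [k [Kk ->]] [k' [Kk' ->]]; exists (k + k'); split; [exact: smD | rewrite scalerDr].
      - move=> r u [k [Kk ->]]; exists (r *: k); split; first exact: smZ.
        by rewrite !scalerA mulrC.
    apply: IH => //.
      exists (map (fun v => c *: v) s); apply: gen_eq => //.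
        by move=> u /= /mapP [v vs ->]; exists v; split => //; rewrite Ks; apply: gen_incl.
      move=> u [k [Kk ->]].
      have HQ : is_submod [set k | submod_gen [set x | x \in map (fun v => c *: v) s] (c *: k)].
        split; first by rewrite /= scaler0; apply: sm0; apply: gen_submod.
        split.
        - by move=> a b /= Ha Hb; rewrite scalerDr; apply: (smD (gen_submod _)).
        - by move=> r a /= Ha; rewrite scalerA mulrC -scalerA; apply: (smZ _ (gen_submod _)).
      move: Kk; rewrite Ks => Kk; apply: (gen_min HQ _ Kk) => v /= vs.
      by apply: gen_incl; rewrite /= map_f.
    move=> u [k [Kk ->]]; case: (KN _ Kk) => Nk Hk; split; first exact: smZ.
    by rewrite scalerA -exprSr.
move=> K HK [s Ks] KN.
have [m Hm] : exists m, forall v, v \in s -> c ^+ m *: v = 0.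
  have : forall v, v \in s -> N v by move=> v vs; apply: KN; rewrite Ks; apply: gen_incl.
  elim: s {Ks} => [|v s IHs] Hs; first by exists 0%N => v; rewrite in_nil.
  have [m Hm] : exists m, forall v, v \in s -> c ^+ m *: v = 0.
    by apply: IHs => u us; apply: Hs; rewrite in_cons us orbT.
  have [n Hn] := tors _ (Hs _ (mem_head _ _)).
  exists (maxn n m) => u; rewrite in_cons => /orP [/eqP -> | us].
    by apply: (pow_kill Hn); rewrite leq_maxl.
  by apply: (pow_kill (Hm _ us)); rewrite leq_maxr.
have KNm : K `<=` Nm c N m.
  rewrite Ks; apply: gen_min; first exact: Nm_submod.
  by move=> v /= vs; split; [apply: KN; rewrite Ks; apply: gen_incl | exact: Hm].
apply: (@sub_finite_set _ _ (Ass_quot (Nm c N m.+1) K)); last first.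
  apply: claim => //; first by exists s.
  by move=> u Ku; case: (KNm _ Ku) => Nu Hu; split => //; rewrite exprS -scalerA Hu scaler0.
move=> q [Pq [x [Nx [nKx Eq]]]]; split => //; exists x; split => //.
have [n Hn] := tors _ Nx.
have : q (c ^+ n) by rewrite Eq /= Hn; apply: sm0.
move=> /(prime_pow Pq); rewrite Eq /= => Kcx.
split => //; case: (KNm _ Kcx) => _ H; rewrite exprSr -scalerA; exact: H.
Qed.


Lemma outer (noeth : noetherian_ring R) (cs : seq R) : forall N : set M, is_submod N ->
  (forall c, c \in cs -> forall x, N x -> exists n, c ^+ n *: x = 0) ->
  fwl [set x | N x /\ forall c, c \in cs -> c *: x = 0] -> fwl N.
Proof.
elim: cs => [|c cs IH] N HN tors H.
  have E : [set x | N x /\ forall c, c \in [::] -> c *: x = 0] = N.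
    by apply/seteqP; split => x /=; [case | split => // c; rewrite in_nil].
  by rewrite E in H.
pose N' := [set x | N x /\ forall d, d \in cs -> d *: x = 0].
have HN' : is_submod N'.
  split; first by split; [exact: sm0 | move=> d _; rewrite scaler0].
  split.
  - move=> x y [Nx Hx] [Ny Hy]; split; first exact: smD.
    by move=> d hd; rewrite scalerDr Hx // Hy // addr0.
  - move=> r x [Nx Hx]; split; first exact: smZ.
    by move=> d hd; rewrite scalerA mulrC -scalerA Hx // scaler0.
apply: (IH N HN).
  by move=> d hd; apply: tors; rewrite in_cons hd orbT.
apply: (principal noeth (c := c)) => //.
  by move=> x [Nx _]; apply: tors => //; rewrite mem_head.
have -> : Nm c N' 1 = [set x | N x /\ forall d, d \in c :: cs -> d *: x = 0] => //.
apply/seteqP; split => x /=.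
  move=> [[Nx Hx] Hc]; split => // d; rewrite in_cons => /orP [/eqP -> | hd].
    by rewrite -(expr1 c).
  exact: Hx.
move=> [Nx Hx]; split.
  by split => // d hd; apply: Hx; rewrite in_cons hd orbT.
by rewrite expr1; apply: Hx; rewrite mem_head.
Qed.

End Aux.

Theorem proposition3p14 (R : comPzRingType) :
  noetherian_ring R ->
  forall a : set R, is_ideal a -> condition_C (@fwl_class R) a.
Proof.
move=> noeth a Ha M HG Hcol.
have [cs Ecs] := noeth _ Ha.
have acs : forall c, c \in cs -> a c by move=> c hc; rewrite Ecs; exact: (@igen_incl R [set x | x \in cs] c hc).
have HT : is_submod [set: M].
  by split => //.
apply: (outer noeth (cs := cs) HT).
  move=> c hc x _.
  have : Gamma a x by rewrite HG.
  move=> [n Hn]; exists n; apply: Hn.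
  apply: igen_incl; exists (nseq n c); split; first by rewrite size_nseq.
  split.
    by move=> y; rewrite mem_nseq => /andP [_ /eqP ->]; apply: acs.
  elim: n => [|n IHn]; first by rewrite big_nil expr0.
  by rewrite /= big_cons exprS IHn.
have -> : [set x : M | [set: M] x /\ forall c, c \in cs -> c *: x = 0] = colon0 a => //.
apply/seteqP; split => x /=.
  move=> [_ Hx] r ar.
  have HI : is_ideal [set r : R | r *: x = 0].
    split; first by rewrite /= scale0r.
    split.
    - by move=> u v /= Hu Hv; rewrite scalerDl Hu Hv addr0.
    - by move=> u v /= Hv; rewrite -scalerA Hv scaler0.
  move: ar; rewrite Ecs => ar.
  by apply: (igen_min HI _ ar) => c /= hc; apply: Hx.
by move=> Hx; split => // c hc; apply: Hx; apply: acs.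
Qed.
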